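(* There exists a $(697,25)$-arc in $\operatorname{PG}(2,29)$; hence $m_{25}(2,29)\ge 697$.
   Context: Points of $\operatorname{PG}(2,q)$ are the 1-dimensional subspaces of $\operatorname{GF}(q)^3$, lines are the 2-dimensional subspaces. An $(n,r)$-arc in $\operatorname{PG}(2,q)$ is a set $\mathcal B$ of $n$ points such that every line contains at most $r$ points of $\mathcal B$ and at least one line contains exactly $r$ points of $\mathcal B$. $m_r(2,q)$ is the maximum $n$ for which an $(n,r)$-arc in $\operatorname{PG}(2,q)$ exists. *)

(* Defs.v *)
From HB Require Import structures.
From mathcomp Require Import all_boot all_order all_algebra all_field.
Set Implicit Arguments. Unset Strict Implicit. Unset Printing Implicit Defensive.
Import GRing.Theory.
Local Open Scope ring_scope.

Definition PG2_point (F : fieldType) (P : {vspace 'rV[F]_3}) : bool :=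
  \dim P == 1%N.
Definition PG2_line (F : fieldType) (L : {vspace 'rV[F]_3}) : bool :=
  \dim L == 2%N.

Definition on_line (F : fieldType) (B : seq {vspace 'rV[F]_3})
  (L : {vspace 'rV[F]_3}) : nat :=
  count (fun P => (P <= L)%VS) B.

(* B (a duplicate-free list of points, i.e. a set of n points) is an
   (n,r)-arc in PG(2,F). *)
Definition is_arc (F : fieldType) (n r : nat) (B : seq {vspace 'rV[F]_3}) : Prop :=
  [/\ uniq B, size B = n, all (@PG2_point F) B,
      (forall L, PG2_line L -> (on_line B L <= r)%N)
    & exists2 L, PG2_line L & on_line B L = r].

(* Main.v *)
Require Import Defs.
From mathcomp Require Import all_boot all_order all_algebra all_field.
From mathcomp Require Import ring.
Set Implicit Arguments. Unset Strict Implicit. Unset Printing Implicit Defensive.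
Import GRing.Theory.
Local Open Scope ring_scope.

Definition i0 : 'I_3 := @Ordinal 3 0 isT.
Definition i1 : 'I_3 := @Ordinal 3 1 isT.
Definition i2 : 'I_3 := @Ordinal 3 2 isT.

Lemma ord3_cases (P : 'I_3 -> Prop) : P i0 -> P i1 -> P i2 -> forall i, P i.
Proof.
move=> h0 h1 h2 [[|[|[|//]]] Hi].
- by have -> : Ordinal Hi = i0 by apply: val_inj.
- by have -> : Ordinal Hi = i1 by apply: val_inj.
- by have -> : Ordinal Hi = i2 by apply: val_inj.
Qed.

Lemma row3_eq (F : fieldType) (u v : 'rV[F]_3) :
  u 0 i0 = v 0 i0 -> u 0 i1 = v 0 i1 -> u 0 i2 = v 0 i2 -> u = v.
Proof. by move=> h0 h1 h2; apply/rowP; elim/ord3_cases. Qed.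

Definition mk3 (F : fieldType) (a b c : F) : 'rV[F]_3 :=
  \row_(i < 3) (if val i == 0%N then a else if val i == 1%N then b else c).

Lemma mk3E0 (F : fieldType) (a b c : F) : mk3 a b c 0 i0 = a. Proof. by rewrite mxE. Qed.
Lemma mk3E1 (F : fieldType) (a b c : F) : mk3 a b c 0 i1 = b. Proof. by rewrite mxE. Qed.
Lemma mk3E2 (F : fieldType) (a b c : F) : mk3 a b c 0 i2 = c. Proof. by rewrite mxE. Qed.

Definition dot (F : fieldType) (u v : 'rV[F]_3) :=
  u 0 i0 * v 0 i0 + u 0 i1 * v 0 i1 + u 0 i2 * v 0 i2.

Definition cross (F : fieldType) (u v : 'rV[F]_3) : 'rV[F]_3 :=
  mk3 (u 0 i1 * v 0 i2 - u 0 i2 * v 0 i1) (u 0 i2 * v 0 i0 - u 0 i0 * v 0 i2)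
      (u 0 i0 * v 0 i1 - u 0 i1 * v 0 i0).

Lemma dot_lin2 (F : fieldType) (a b : F) x y n :
  dot (a *: x + b *: y) n = a * dot x n + b * dot y n.
Proof. rewrite /dot !mxE; ring. Qed.

Lemma dot_lin3 (F : fieldType) (a b c : F) x y z n :
  dot (a *: x + b *: y + c *: z) n = a * dot x n + b * dot y n + c * dot z n.
Proof. rewrite /dot !mxE; ring. Qed.

Lemma dot_scaler (F : fieldType) (k : F) v n : dot v (k *: n) = k * dot v n.
Proof. rewrite /dot !mxE; ring. Qed.

Lemma dot_cross1 (F : fieldType) (b1 b2 : 'rV[F]_3) : dot b1 (cross b1 b2) = 0.
Proof. rewrite /dot /cross mk3E0 mk3E1 mk3E2; ring. Qed.
Lemma dot_cross2 (F : fieldType) (b1 b2 : 'rV[F]_3) : dot b2 (cross b1 b2) = 0.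
Proof. rewrite /dot /cross mk3E0 mk3E1 mk3E2; ring. Qed.

Lemma mem_span2 (F : fieldType) (b1 b2 v : 'rV[F]_3) :
  v \in <<[:: b1; b2]>>%VS -> exists a b, v = a *: b1 + b *: b2.
Proof.
rewrite span_cons span_seq1 => /memv_addP [x /vlineP [a ->] [y /vlineP [b ->] ->]].
by exists a, b.
Qed.

Lemma mem_span3 (F : fieldType) (b0 b1 b2 v : 'rV[F]_3) :
  v \in <<[:: b0; b1; b2]>>%VS -> exists a b c, v = a *: b0 + b *: b1 + c *: b2.
Proof.
rewrite span_cons => /memv_addP [x /vlineP [a ->] [y /mem_span2 [b [c ->]] ->]].
by exists a, b, c; rewrite addrA.
Qed.
Lemma cross_neq0 (F : fieldType) (b1 b2 : 'rV[F]_3) :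
  free [:: b1; b2] -> cross b1 b2 != 0.
Proof.
rewrite free_cons seq1_free span_seq1 => /andP [nb1 nb2].
apply/negP => /eqP c.
have c0 : b1 0 i1 * b2 0 i2 = b1 0 i2 * b2 0 i1.
  by apply/eqP; rewrite -subr_eq0; move: (congr1 (fun w : 'rV[F]_3 => w 0 i0) c); rewrite mk3E0 mxE => ->.
have c1 : b1 0 i2 * b2 0 i0 = b1 0 i0 * b2 0 i2.
  by apply/eqP; rewrite -subr_eq0; move: (congr1 (fun w : 'rV[F]_3 => w 0 i1) c); rewrite mk3E1 mxE => ->.
have c2 : b1 0 i0 * b2 0 i1 = b1 0 i1 * b2 0 i0.
  by apply/eqP; rewrite -subr_eq0; move: (congr1 (fun w : 'rV[F]_3 => w 0 i2) c); rewrite mk3E2 mxE => ->.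
suff [j [hj E]] : exists j, b2 0 j != 0 /\ forall k, b1 0 k * b2 0 j = b1 0 j * b2 0 k.
  move/negP: nb1; apply; apply/vlineP; exists (b1 0 j / b2 0 j).
  apply/rowP => k; rewrite mxE; apply: (mulIf hj).
  by rewrite E mulrAC divfK.
have [h0|h0] := eqVneq (b2 0 i0) 0; last first.
  by exists i0; split => //; elim/ord3_cases; [by []|by rewrite c2|by rewrite c1].
have [h1|h1] := eqVneq (b2 0 i1) 0; last first.
  by exists i1; split => //; elim/ord3_cases; [by rewrite c2|by []|by rewrite c0].
have [h2|h2] := eqVneq (b2 0 i2) 0; last first.
  by exists i2; split => //; elim/ord3_cases; [by rewrite c1|by rewrite c0|by []].
move/negP: nb2; case; apply/eqP/row3_eq; by rewrite mxE.
Qed.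

Lemma line_char (F : fieldType) (b1 b2 : 'rV[F]_3) :
  \dim <<[:: b1; b2]>> = 2%N ->
  forall v, (v \in <<[:: b1; b2]>>%VS) = (dot v (cross b1 b2) == 0).
Proof.
move=> hd v.
have fr : free [:: b1; b2] by rewrite /free hd.
apply/idP/idP.
  by move/mem_span2 => [a [b ->]]; rewrite dot_lin2 dot_cross1 dot_cross2 !mulr0 addr0.
move=> /eqP hv; apply/negPn/negP => hnot.
have fr3 : free [:: v; b1; b2] by rewrite free_cons hnot fr.
have full : <<[:: v; b1; b2]>>%VS = fullv.
  apply/eqP; rewrite eqEdim subvf dimvf dim_matrix (eqP fr3) //.
have key : forall e, dot e (cross b1 b2) = 0.
  move=> e; have : e \in <<[:: v; b1; b2]>>%VS by rewrite full memvf.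
  move/mem_span3 => [a [b [c ->]]].
  by rewrite dot_lin3 hv dot_cross1 dot_cross2 !mulr0 !addr0.
move/negP: (cross_neq0 fr); apply; apply/eqP/row3_eq.
- transitivity (dot (mk3 1 0 0) (cross b1 b2)); first by rewrite /dot mk3E0 mk3E1 mk3E2; ring.
  by rewrite key mxE.
- transitivity (dot (mk3 0 1 0) (cross b1 b2)); first by rewrite /dot mk3E0 mk3E1 mk3E2; ring.
  by rewrite key mxE.
- transitivity (dot (mk3 0 0 1) (cross b1 b2)); first by rewrite /dot mk3E0 mk3E1 mk3E2; ring.
  by rewrite key mxE.
Qed.

Local Open Scope nat_scope.
Definition tdot (t s : nat*nat*nat) : nat := t.1.1*s.1.1 + t.1.2*s.1.2 + t.2*s.2.
Definition allnorm : seq (nat*nat*nat) :=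
  [seq (1,a,b) | a <- iota 0 29, b <- iota 0 29] ++ [seq (0,1,a) | a <- iota 0 29] ++ [:: (0,0,1)].
Definition lead (t : nat*nat*nat) : bool :=
  [|| t.1.1 == 1, (t.1.1 == 0) && (t.1.2 == 1) | [&& t.1.1 == 0, t.1.2 == 0 & t.2 == 1]].
Definition small (t : nat*nat*nat) : bool := [&& t.1.1 < 29, t.1.2 < 29 & t.2 < 29].
Definition arcl : seq (nat*nat*nat) := [::
(1,0,0);
(1,0,2);
(1,0,3);
(1,0,4);
(1,0,6);
(1,0,7);
(1,0,8);
(1,0,9);
(1,0,10);
(1,0,11);
(1,0,12);
(1,0,13);
(1,0,15);
(1,0,16);
(1,0,17);
(1,0,18);
(1,0,19);
(1,0,20);
(1,0,21);
(1,0,24);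
(1,0,25);
(1,0,26);
(1,0,27);
(1,0,28);
(1,1,0);
(1,1,1);
(1,1,2);
(1,1,3);
(1,1,4);
(1,1,5);
(1,1,7);
(1,1,8);
(1,1,9);
(1,1,10);
(1,1,11);
(1,1,12);
(1,1,13);
(1,1,15);
(1,1,16);
(1,1,18);
(1,1,19);
(1,1,20);
(1,1,21);
(1,1,22);
(1,1,23);
(1,1,24);
(1,1,25);
(1,1,28);
(1,2,0);
(1,2,1);
(1,2,2);
(1,2,4);
(1,2,5);
(1,2,6);
(1,2,7);
(1,2,8);
(1,2,9);
(1,2,10);
(1,2,11);
(1,2,13);
(1,2,15);
(1,2,16);
(1,2,17);
(1,2,19);
(1,2,20);
(1,2,21);
(1,2,23);
(1,2,24);
(1,2,25);
(1,2,26);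
(1,2,27);
(1,2,28);
(1,3,0);
(1,3,2);
(1,3,3);
(1,3,4);
(1,3,5);
(1,3,6);
(1,3,9);
(1,3,11);
(1,3,12);
(1,3,13);
(1,3,15);
(1,3,16);
(1,3,17);
(1,3,19);
(1,3,20);
(1,3,21);
(1,3,22);
(1,3,23);
(1,3,24);
(1,3,25);
(1,3,26);
(1,3,27);
(1,3,28);
(1,4,0);
(1,4,3);
(1,4,4);
(1,4,5);
(1,4,6);
(1,4,7);
(1,4,8);
(1,4,9);
(1,4,10);
(1,4,11);
(1,4,12);
(1,4,15);
(1,4,16);
(1,4,17);
(1,4,18);
(1,4,19);
(1,4,20);
(1,4,21);
(1,4,23);
(1,4,24);
(1,4,25);
(1,4,26);
(1,4,27);
(1,4,28);
(1,5,0);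
(1,5,1);
(1,5,2);
(1,5,3);
(1,5,4);
(1,5,5);
(1,5,6);
(1,5,7);
(1,5,8);
(1,5,9);
(1,5,11);
(1,5,12);
(1,5,13);
(1,5,15);
(1,5,16);
(1,5,17);
(1,5,19);
(1,5,20);
(1,5,21);
(1,5,22);
(1,5,24);
(1,5,27);
(1,5,28);
(1,6,1);
(1,6,2);
(1,6,3);
(1,6,4);
(1,6,5);
(1,6,7);
(1,6,9);
(1,6,10);
(1,6,11);
(1,6,12);
(1,6,13);
(1,6,16);
(1,6,17);
(1,6,18);
(1,6,19);
(1,6,20);
(1,6,22);
(1,6,24);
(1,6,25);
(1,6,26);
(1,6,27);
(1,6,28);
(1,7,0);
(1,7,1);
(1,7,3);
(1,7,4);
(1,7,5);
(1,7,6);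
(1,7,8);
(1,7,9);
(1,7,10);
(1,7,11);
(1,7,12);
(1,7,13);
(1,7,15);
(1,7,17);
(1,7,18);
(1,7,19);
(1,7,21);
(1,7,22);
(1,7,23);
(1,7,24);
(1,7,25);
(1,7,26);
(1,7,27);
(1,8,0);
(1,8,1);
(1,8,2);
(1,8,5);
(1,8,6);
(1,8,7);
(1,8,8);
(1,8,9);
(1,8,10);
(1,8,12);
(1,8,13);
(1,8,15);
(1,8,16);
(1,8,17);
(1,8,18);
(1,8,19);
(1,8,20);
(1,8,21);
(1,8,22);
(1,8,23);
(1,8,24);
(1,8,25);
(1,8,26);
(1,9,1);
(1,9,2);
(1,9,3);
(1,9,4);
(1,9,5);
(1,9,7);
(1,9,8);
(1,9,10);
(1,9,11);
(1,9,12);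
(1,9,13);
(1,9,16);
(1,9,17);
(1,9,18);
(1,9,19);
(1,9,21);
(1,9,22);
(1,9,24);
(1,9,25);
(1,9,26);
(1,9,27);
(1,9,28);
(1,10,0);
(1,10,2);
(1,10,3);
(1,10,4);
(1,10,5);
(1,10,6);
(1,10,7);
(1,10,8);
(1,10,9);
(1,10,10);
(1,10,11);
(1,10,13);
(1,10,15);
(1,10,16);
(1,10,17);
(1,10,18);
(1,10,20);
(1,10,21);
(1,10,22);
(1,10,23);
(1,10,24);
(1,10,25);
(1,10,26);
(1,10,28);
(1,11,1);
(1,11,2);
(1,11,3);
(1,11,5);
(1,11,6);
(1,11,7);
(1,11,8);
(1,11,9);
(1,11,11);
(1,11,12);
(1,11,13);
(1,11,16);
(1,11,17);
(1,11,18);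
(1,11,20);
(1,11,21);
(1,11,22);
(1,11,23);
(1,11,24);
(1,11,26);
(1,11,27);
(1,11,28);
(1,12,0);
(1,12,1);
(1,12,2);
(1,12,3);
(1,12,4);
(1,12,5);
(1,12,6);
(1,12,7);
(1,12,8);
(1,12,9);
(1,12,10);
(1,12,12);
(1,12,13);
(1,12,15);
(1,12,16);
(1,12,17);
(1,12,18);
(1,12,19);
(1,12,21);
(1,12,23);
(1,12,26);
(1,12,27);
(1,12,28);
(1,13,1);
(1,13,2);
(1,13,3);
(1,13,4);
(1,13,6);
(1,13,8);
(1,13,9);
(1,13,10);
(1,13,11);
(1,13,12);
(1,13,13);
(1,13,16);
(1,13,18);
(1,13,19);
(1,13,20);
(1,13,21);
(1,13,22);
(1,13,23);
(1,13,24);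
(1,13,25);
(1,13,26);
(1,13,27);
(1,13,28);
(1,14,0);
(1,14,1);
(1,14,2);
(1,14,4);
(1,14,6);
(1,14,7);
(1,14,8);
(1,14,11);
(1,14,12);
(1,14,13);
(1,14,15);
(1,14,16);
(1,14,18);
(1,14,19);
(1,14,20);
(1,14,21);
(1,14,22);
(1,14,23);
(1,14,24);
(1,14,25);
(1,14,26);
(1,14,27);
(1,14,28);
(1,15,2);
(1,15,3);
(1,15,4);
(1,15,6);
(1,15,7);
(1,15,8);
(1,15,9);
(1,15,11);
(1,15,12);
(1,15,13);
(1,15,15);
(1,15,16);
(1,15,17);
(1,15,18);
(1,15,19);
(1,15,20);
(1,15,21);
(1,15,22);
(1,15,23);
(1,15,24);
(1,15,25);
(1,15,26);
(1,15,27);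
(1,16,1);
(1,16,2);
(1,16,3);
(1,16,4);
(1,16,5);
(1,16,6);
(1,16,7);
(1,16,8);
(1,16,9);
(1,16,10);
(1,16,11);
(1,16,13);
(1,16,16);
(1,16,17);
(1,16,18);
(1,16,19);
(1,16,20);
(1,16,21);
(1,16,23);
(1,16,25);
(1,16,26);
(1,16,27);
(1,16,28);
(1,17,0);
(1,17,1);
(1,17,2);
(1,17,3);
(1,17,4);
(1,17,5);
(1,17,6);
(1,17,7);
(1,17,8);
(1,17,9);
(1,17,11);
(1,17,12);
(1,17,13);
(1,17,15);
(1,17,16);
(1,17,18);
(1,17,19);
(1,17,21);
(1,17,22);
(1,17,23);
(1,17,25);
(1,17,26);
(1,17,27);
(1,17,28);
(1,18,0);
(1,18,1);
(1,18,2);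
(1,18,3);
(1,18,4);
(1,18,5);
(1,18,8);
(1,18,9);
(1,18,10);
(1,18,11);
(1,18,12);
(1,18,13);
(1,18,15);
(1,18,17);
(1,18,18);
(1,18,20);
(1,18,21);
(1,18,22);
(1,18,23);
(1,18,24);
(1,18,26);
(1,18,27);
(1,18,28);
(1,19,0);
(1,19,2);
(1,19,3);
(1,19,4);
(1,19,5);
(1,19,6);
(1,19,7);
(1,19,8);
(1,19,9);
(1,19,10);
(1,19,11);
(1,19,13);
(1,19,15);
(1,19,16);
(1,19,17);
(1,19,18);
(1,19,20);
(1,19,21);
(1,19,22);
(1,19,23);
(1,19,24);
(1,19,25);
(1,19,26);
(1,19,28);
(1,20,0);
(1,20,1);
(1,20,3);
(1,20,4);
(1,20,5);
(1,20,7);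
(1,20,10);
(1,20,11);
(1,20,12);
(1,20,13);
(1,20,15);
(1,20,16);
(1,20,17);
(1,20,18);
(1,20,20);
(1,20,21);
(1,20,22);
(1,20,23);
(1,20,24);
(1,20,25);
(1,20,26);
(1,20,27);
(1,20,28);
(1,21,0);
(1,21,1);
(1,21,2);
(1,21,3);
(1,21,5);
(1,21,6);
(1,21,8);
(1,21,10);
(1,21,12);
(1,21,13);
(1,21,15);
(1,21,16);
(1,21,17);
(1,21,18);
(1,21,19);
(1,21,20);
(1,21,21);
(1,21,22);
(1,21,23);
(1,21,24);
(1,21,25);
(1,21,26);
(1,21,27);
(1,21,28);
(1,22,1);
(1,22,2);
(1,22,4);
(1,22,5);
(1,22,6);
(1,22,7);
(1,22,8);
(1,22,9);
(1,22,10);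
(1,22,11);
(1,22,12);
(1,22,13);
(1,22,15);
(1,22,17);
(1,22,18);
(1,22,19);
(1,22,20);
(1,22,21);
(1,22,22);
(1,22,23);
(1,22,24);
(1,22,25);
(1,22,27);
(1,23,0);
(1,23,1);
(1,23,2);
(1,23,3);
(1,23,4);
(1,23,5);
(1,23,6);
(1,23,7);
(1,23,8);
(1,23,10);
(1,23,11);
(1,23,12);
(1,23,13);
(1,23,15);
(1,23,16);
(1,23,17);
(1,23,18);
(1,23,19);
(1,23,20);
(1,23,22);
(1,23,26);
(1,23,27);
(1,23,28);
(1,24,0);
(1,24,1);
(1,24,2);
(1,24,3);
(1,24,4);
(1,24,5);
(1,24,6);
(1,24,7);
(1,24,8);
(1,24,9);
(1,24,10);
(1,24,11);
(1,24,12);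
(1,24,13);
(1,24,15);
(1,24,17);
(1,24,19);
(1,24,20);
(1,24,22);
(1,24,23);
(1,24,24);
(1,24,25);
(1,24,27);
(1,24,28);
(1,25,0);
(1,25,1);
(1,25,3);
(1,25,5);
(1,25,6);
(1,25,7);
(1,25,9);
(1,25,10);
(1,25,11);
(1,25,12);
(1,25,15);
(1,25,16);
(1,25,18);
(1,25,19);
(1,25,20);
(1,25,21);
(1,25,22);
(1,25,23);
(1,25,24);
(1,25,25);
(1,25,26);
(1,25,27);
(1,25,28);
(1,26,1);
(1,26,2);
(1,26,3);
(1,26,4);
(1,26,5);
(1,26,6);
(1,26,9);
(1,26,10);
(1,26,11);
(1,26,12);
(1,26,15);
(1,26,17);
(1,26,18);
(1,26,19);
(1,26,20);
(1,26,21);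
(1,26,22);
(1,26,23);
(1,26,24);
(1,26,25);
(1,26,26);
(1,26,27);
(1,26,28);
(1,27,0);
(1,27,1);
(1,27,2);
(1,27,4);
(1,27,5);
(1,27,6);
(1,27,7);
(1,27,8);
(1,27,10);
(1,27,11);
(1,27,13);
(1,27,15);
(1,27,16);
(1,27,17);
(1,27,18);
(1,27,19);
(1,27,20);
(1,27,22);
(1,27,23);
(1,27,24);
(1,27,25);
(1,27,26);
(1,27,27);
(1,28,0);
(1,28,1);
(1,28,2);
(1,28,3);
(1,28,4);
(1,28,6);
(1,28,7);
(1,28,8);
(1,28,9);
(1,28,10);
(1,28,12);
(1,28,15);
(1,28,16);
(1,28,18);
(1,28,19);
(1,28,20);
(1,28,21);
(1,28,22);
(1,28,23);
(1,28,24);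
(1,28,25);
(1,28,26);
(1,28,28);
(0,1,1);
(0,1,2);
(0,1,3);
(0,1,4);
(0,1,6);
(0,1,7);
(0,1,8);
(0,1,9);
(0,1,10);
(0,1,11);
(0,1,13);
(0,1,14);
(0,1,15);
(0,1,16);
(0,1,17);
(0,1,18);
(0,1,19);
(0,1,20);
(0,1,22);
(0,1,23);
(0,1,26);
(0,1,27);
(0,1,28);
(0,0,1)].
Local Open Scope ring_scope.

Definition vec (t : nat*nat*nat) : 'rV['F_29]_3 := mk3 t.1.1%:R t.1.2%:R t.2%:R.

Lemma prime29 : prime 29. Proof. by []. Qed.

Lemma dot_vec t s : dot (vec t) (vec s) = (tdot t s)%:R.
Proof. by rewrite /dot /vec !mk3E0 !mk3E1 !mk3E2 /tdot !natrD !natrM. Qed.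

Lemma F29_eq0 n : ((n%:R : 'F_29) == 0) = (29 %| n)%N.
Proof. by rewrite (GRing.dvdn_pcharf (pchar_Fp prime29)). Qed.

Lemma F29_natr (y : 'F_29) : ((val y)%:R : 'F_29) = y.
Proof. by apply: ord_inj; rewrite val_Fp_nat // modn_small //; exact: (ltn_ord y). Qed.

Lemma natr_inj29 a b : (a < 29)%N -> (b < 29)%N -> (a%:R : 'F_29) = b%:R -> a = b.
Proof.
move=> ha hb /(congr1 (@nat_of_ord _)); rewrite !val_Fp_nat // !modn_small //.
Qed.

Lemma vec_inj s t : small s -> small t -> vec s = vec t -> s = t.
Proof.
case: s => [[a b] c]; case: t => [[a' b'] c']; rewrite /small /= => /and3P [ha hb hc] /and3P [ha' hb' hc'] e.
have e0 := congr1 (fun w : 'rV_3 => w 0 i0) e.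
have e1 := congr1 (fun w : 'rV_3 => w 0 i1) e.
have e2 := congr1 (fun w : 'rV_3 => w 0 i2) e.
rewrite /vec !mk3E0 !mk3E1 !mk3E2 /= in e0 e1 e2.
by rewrite (natr_inj29 ha ha' e0) (natr_inj29 hb hb' e1) (natr_inj29 hc hc' e2).
Qed.

Lemma vec_neq0 t : lead t -> vec t != 0.
Proof.
case: t => [[a b] c]; rewrite /lead /=.
case/or3P => [/eqP ->|/andP [_ /eqP ->]|/and3P [_ _ /eqP ->]]; apply/eqP => h.
- by move: (congr1 (fun w : 'rV_3 => w 0 i0) h); rewrite /vec mk3E0 mxE => /eqP; rewrite oner_eq0.
- by move: (congr1 (fun w : 'rV_3 => w 0 i1) h); rewrite /vec mk3E1 mxE => /eqP; rewrite oner_eq0.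
- by move: (congr1 (fun w : 'rV_3 => w 0 i2) h); rewrite /vec mk3E2 mxE => /eqP; rewrite oner_eq0.
Qed.

Lemma lead_scale s t (k : 'F_29) : lead s -> lead t -> vec s = k *: vec t -> vec s = vec t.
Proof.
case: s => [[a b] c]; case: t => [[a' b'] c'] hs ht e.
suff k1 : k = 1 by rewrite e k1 scale1r.
have e0 : vec (a,b,c) 0 i0 = k * vec (a',b',c') 0 i0 by rewrite e mxE.
have e1 : vec (a,b,c) 0 i1 = k * vec (a',b',c') 0 i1 by rewrite e mxE.
have e2 : vec (a,b,c) 0 i2 = k * vec (a',b',c') 0 i2 by rewrite e mxE.
rewrite /vec !mk3E0 /= in e0; rewrite /vec !mk3E1 /= in e1; rewrite /vec !mk3E2 /= in e2.
move: hs ht; rewrite /lead /=.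
case/or3P => [/eqP ?|/andP [/eqP ? /eqP ?]|/and3P [/eqP ? /eqP ? /eqP ?]];
case/or3P => [/eqP ?|/andP [/eqP ? /eqP ?]|/and3P [/eqP ? /eqP ?  /eqP ?]]; subst;
rewrite ?mulr1n ?mulr0n ?mulr1 ?mulr0 in e0 e1 e2;
try (subst k); repeat match goal with H : context[0 * ?x] |- _ => rewrite mul0r in H end; try done;
match goal with
| H : 1 = 0 |- _ => by move/eqP: H; rewrite oner_eq0
| H : 0 = 1 |- _ => by move/eqP: H; rewrite eq_sym oner_eq0
| H : 1 = k |- _ => by rewrite -H
end.
Qed.

Lemma dot_scale_eq0 (F : fieldType) (c : F) v n : c != 0 ->
  (dot v (c *: n) == 0) = (dot v n == 0).
Proof. by move=> hc; rewrite dot_scaler mulf_eq0 (negbTE hc). Qed.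

Lemma norm_rep (n : 'rV['F_29]_3) : n != 0 ->
  exists2 s, s \in allnorm & forall v, (dot v n == 0) = (dot v (vec s) == 0).
Proof.
move=> nz.
suff [c [s [hc hs e]]] : exists c s, [/\ c != 0, s \in allnorm & vec s = c *: n].
  by exists s => // v; rewrite e dot_scale_eq0.
have [h0|h0] := eqVneq (n 0 i0) 0; last first.
  exists (n 0 i0)^-1, (1%N, val (n 0 i1 / n 0 i0), val (n 0 i2 / n 0 i0)); split.
  - by rewrite invr_eq0.
  - rewrite mem_cat; apply/orP; left; apply: (allpairs_f (fun a b => (1%N, a, b))); rewrite mem_iota; exact: ltn_ord.
  - apply: row3_eq; rewrite /vec ?mk3E0 ?mk3E1 ?mk3E2; cbn [fst snd]; rewrite !mxE ?F29_natr.
    + by rewrite mulVf.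
    + by rewrite mulrC.
    + by rewrite mulrC.
have [h1|h1] := eqVneq (n 0 i1) 0; last first.
  exists (n 0 i1)^-1, (0%N, 1%N, val (n 0 i2 / n 0 i1)); split.
  - by rewrite invr_eq0.
  - rewrite mem_cat; apply/orP; right; rewrite mem_cat; apply/orP; left.
    apply: (map_f (fun a => (0%N, 1%N, a))); rewrite mem_iota; exact: ltn_ord.
  - apply: row3_eq; rewrite /vec ?mk3E0 ?mk3E1 ?mk3E2; cbn [fst snd]; rewrite !mxE ?F29_natr.
    + by rewrite h0 mulr0.
    + by rewrite mulVf.
    + by rewrite mulrC.
have [h2|h2] := eqVneq (n 0 i2) 0.
  by move/negP: nz; case; apply/eqP/row3_eq; rewrite mxE.
exists (n 0 i2)^-1, (0%N, 0%N, 1%N); split.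
- by rewrite invr_eq0.
- by rewrite !mem_cat mem_head !orbT.
- apply: row3_eq; rewrite /vec ?mk3E0 ?mk3E1 ?mk3E2; cbn [fst snd]; rewrite !mxE.
  + by rewrite h0 mulr0.
  + by rewrite h1 mulr0.
  + by rewrite mulVf.
Qed.

Lemma check_all : all (fun s => (count (fun t => (29 %| tdot t s)%N) arcl <= 25)%N) allnorm.
Proof. vm_compute. reflexivity. Qed.

Lemma check_25 : count (fun t => (29 %| tdot t (0,1,0))%N) arcl = 25%N.
Proof. vm_compute. reflexivity. Qed.

Lemma check_ns : all (fun t => lead t && small t) arcl.
Proof. vm_compute. reflexivity. Qed.

Lemma check_uniq : uniq arcl.
Proof. vm_compute. reflexivity. Qed.

Lemma check_size : size arcl = 697%N.
Proof. vm_compute. reflexivity. Qed.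

Lemma count_line (b1 b2 : 'rV['F_29]_3) (s : nat * nat * nat) :
  \dim <<[:: b1; b2]>> = 2%N ->
  (forall v, (dot v (cross b1 b2) == 0) = (dot v (vec s) == 0)) ->
  on_line [seq <[vec t]>%VS | t <- arcl] <<[:: b1; b2]>>%VS
    = count (fun t => (29 %| tdot t s)%N) arcl.
Proof.
move=> hd hs; rewrite /on_line count_map; apply: eq_count => t /=.
by rewrite -memvE line_char // hs dot_vec F29_eq0.
Qed.

Local Close Scope ring_scope.

Theorem mainTheorem15 :
  exists B : seq {vspace 'rV['F_29]_3}, is_arc 697 25 B.
Proof.
exists [seq <[vec t]>%VS | t <- arcl]; split.
- rewrite map_inj_in_uniq ?check_uniq // => s t hs ht e.
  have /allP/(_ s hs)/andP [ls ss] := check_ns.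
  have /allP/(_ t ht)/andP [lt st] := check_ns.
  apply: vec_inj => //.
  have : vec s \in <[vec t]>%VS by rewrite -e memv_line.
  by case/vlineP => k hk; apply: (lead_scale ls lt hk).
- by rewrite size_map check_size.
- apply/allP => P /mapP [t ht ->]; rewrite /PG2_point dim_vline.
  have /allP/(_ t ht)/andP [lt _] := check_ns.
  by rewrite vec_neq0.
- move=> L /eqP hL.
  have hsz : size (vbasis L) = 2%N by rewrite size_tuple.
  have /andP [/eqP spanL frL] := vbasisP L.
  move: spanL frL hsz; case: (tval (vbasis L)) => [|b1 [|b2 [|b3 X]]] spanL frL hsz; try discriminate hsz.
  have hd : \dim <<[:: b1; b2]>> = 2%N by rewrite spanL.
  have [s sin hs] := norm_rep (cross_neq0 frL).
  rewrite -spanL (count_line hd hs).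
  by move/allP: check_all => /(_ s sin).
- have fr : free [:: mk3 0%R 0%R 1%R; mk3 (1%R : 'F_29) 0%R 0%R].
    rewrite free_cons seq1_free span_seq1; apply/andP; split.
      apply/vlineP => [[k hk]].
      move: (congr1 (fun w : 'rV_3 => w 0%R i2) hk); rewrite mk3E2 mxE mk3E2 mulr0 => /eqP.
      by rewrite oner_eq0.
    apply/eqP => h; move: (congr1 (fun w : 'rV_3 => w 0%R i0) h); rewrite mk3E0 mxE => /eqP.
    by rewrite oner_eq0.
  have hd : \dim <<[:: mk3 0%R 0%R 1%R; mk3 (1%R : 'F_29) 0%R 0%R]>> = 2%N by apply/eqP.
  exists <<[:: mk3 0%R 0%R 1%R; mk3 (1%R : 'F_29) 0%R 0%R]>>%VS; first by rewrite /PG2_line hd.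
  rewrite (@count_line _ _ (0,1,0)%N hd) ?check_25 // => v.
  congr (_ == 0%R); rewrite /dot /cross /vec !mk3E0 !mk3E1 !mk3E2 /=; ring.
Qed.
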